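(* Let $\mathcal{G}_1$ be a two-terminal series-parallel graph with source $s_1$ and sink $t_1$, and $\mathcal{G}_2$ one with source $s_2$ and sink $t_2$. For a TTSP graph $\mathcal{G}$ with source $s$ and sink $t$, define $$\big(\mathcal{H}_2^{\mathcal{G}}\big)^2=-\tfrac12\mathrm{Tr}\big[e_t^T A^{-1}e_t\big],$$ where $A=-L_D$ and $L_D$ is the Dirichlet Laplacian of $\mathcal{G}$ grounded at $s$. Then $$\big(\mathcal{H}_2^{\mathcal{G}_1\odot\mathcal{G}_2}\big)^2=\big(\mathcal{H}_2^{\mathcal{G}_1}\big)^2+\big(\mathcal{H}_2^{\mathcal{G}_2}\big)^2,\qquad \big(\mathcal{H}_2^{\mathcal{G}_1\oslash\mathcal{G}_2}\big)^2=\big(\mathcal{H}_2^{\mathcal{G}_1}\big)^2:\big(\mathcal{H}_2^{\mathcal{G}_2}\big)^2.$$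
   Context: Graphs are undirected with positive edge weights (conductances); multiple edges are allowed. Two-terminal series-parallel (TTSP) graphs are defined recursively. A single edge with designated source and sink (a 1-path) is TTSP. If $\mathcal{G}_1,\mathcal{G}_2$ are TTSP with sources $s_1,s_2$ and sinks $t_1,t_2$, then: - the series join $\mathcal{G}_1\odot\mathcal{G}_2$ identifies $t_1$ with $s_2$ and has source $s_1$, sink $t_2$; it is TTSP; - the parallel join $\mathcal{G}_1\oslash\mathcal{G}_2$ identifies $s_1$ with $s_2$ (the source) and $t_1$ with $t_2$ (the sink); it is TTSP. The Dirichlet Laplacian grounded at $s$ is the weighted graph Laplacian with the row and column of $s$ deleted. Thus $\big(\mathcal{H}_2^{\mathcal{G}}\big)^2$ is the squared $\mathcal{H}_2$ norm of the single-leader consensus system $\dot x=Ax+e_tu$, $y=x$, with the source as grounded leader and the sink as input node. For $a,b>0$, the parallel sum is $a:b=\frac{ab}{a+b}=(a^{-1}+b^{-1})^{-1}$. *)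

(* Defs.v *)
From mathcomp Require Import all_boot all_order all_algebra.
Set Implicit Arguments. Unset Strict Implicit. Unset Printing Implicit Defensive.
Import Order.TTheory GRing.Theory Num.Theory.
Local Open Scope ring_scope.

(* A weighted multigraph with vertices 0, ..., nv-1 (as natural numbers),
   a designated source and sink, and a list of edges (u, v, weight). *)
Record tgraph (R : Type) := TGraph {
  nv : nat;
  src : nat;
  snk : nat;
  edges : seq (nat * nat * R)
}.

Section Defs.
Variable R : realFieldType.

(* weighted Laplacian entry L(u,v), vertices as nats; self-loops ignored *)
Definition lap (E : seq (nat * nat * R)) (u v : nat) : R :=
  if u == v then \sum_(e <- E | (e.1.1 == u) (+) (e.1.2 == u)) e.2
  else - \sum_(e <- E | ((e.1.1 == u) && (e.1.2 == v))
                         || ((e.1.1 == v) && (e.1.2 == u))) e.2.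

(* Dirichlet Laplacian grounded at the source: delete row/column src.
   Remaining vertices are indexed by i : 'I_(nv-1) via i |-> bump src i. *)
Definition dirLap (G : tgraph R) : 'M[R]_((nv G).-1) :=
  \matrix_(i, j) lap (edges G) (bump (src G) i) (bump (src G) j).

Definition e_sink (G : tgraph R) : 'cV[R]_((nv G).-1) :=
  \col_i (bump (src G) i == snk G)%:R.

Definition H2sq (G : tgraph R) : R :=
  - (2%:R)^-1 * \tr ((e_sink G)^T *m invmx (- dirLap G) *m e_sink G).

Definition edge_graph (w : R) : tgraph R := TGraph 2 0 1 [:: (0%N, 1%N, w)].

Definition map_edges (f : nat -> nat) (E : seq (nat * nat * R)) :=
  [seq (f e.1.1, f e.1.2, e.2) | e <- E].

(* series join: G2's source identified with G1's sink; other vertices of G2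
   relabelled after those of G1. *)
Definition ser_map (G1 G2 : tgraph R) (v : nat) : nat :=
  if v == src G2 then snk G1 else (nv G1 + v - (src G2 < v))%N.

Definition series (G1 G2 : tgraph R) : tgraph R :=
  TGraph (nv G1 + nv G2 - 1) (src G1) (ser_map G1 G2 (snk G2))
         (edges G1 ++ map_edges (ser_map G1 G2) (edges G2)).

(* parallel join: sources identified, sinks identified *)
Definition par_map (G1 G2 : tgraph R) (v : nat) : nat :=
  if v == src G2 then src G1 else if v == snk G2 then snk G1
  else (nv G1 + v - (src G2 < v) - (snk G2 < v))%N.

Definition parallel (G1 G2 : tgraph R) : tgraph R :=
  TGraph (nv G1 + nv G2 - 2) (src G1) (snk G1)
         (edges G1 ++ map_edges (par_map G1 G2) (edges G2)).

Inductive ttsp : tgraph R -> Prop :=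
  | ttsp_edge w : 0 < w -> ttsp (edge_graph w)
  | ttsp_series G1 G2 : ttsp G1 -> ttsp G2 -> ttsp (series G1 G2)
  | ttsp_parallel G1 G2 : ttsp G1 -> ttsp G2 -> ttsp (parallel G1 G2).

Definition psum (a b : R) : R := a * b / (a + b).

End Defs.

(* Main.v *)
Require Import Defs.
From mathcomp Require Import all_boot all_order all_algebra.
Import GRing.Theory Num.Theory.
Local Open Scope ring_scope.
From mathcomp Require Import zify ring lra.
Import Order.TTheory.
Set Implicit Arguments. Unset Strict Implicit.

Section S.
Variable R : realFieldType.
Implicit Types (E : seq (nat * nat * R)) (y z : nat -> R).

Definition flow E y (v : nat) : R :=
  \sum_(e <- E) ((e.1.1 == v)%:R * e.2 * (y v - y e.1.2)
                + (e.1.2 == v)%:R * e.2 * (y v - y e.1.1)).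

Lemma flow_cat E1 E2 y v : flow (E1 ++ E2) y v = flow E1 y v + flow E2 y v.
Proof. by rewrite /flow big_cat. Qed.

Lemma flow_out E y v : (forall e, e \in E -> e.1.1 != v /\ e.1.2 != v) ->
  flow E y v = 0.
Proof.
move=> H; rewrite /flow big1_seq // => e /andP[_ /H [h1 h2]].
by rewrite (negbTE h1) (negbTE h2) !mul0r addr0.
Qed.

Lemma flow_eq E y z n v : (forall e, e \in E -> (e.1.1 < n)%N /\ (e.1.2 < n)%N) ->
  (v < n)%N -> (forall u, (u < n)%N -> y u = z u) -> flow E y v = flow E z v.
Proof.
move=> H hv hyz; rewrite /flow; apply: eq_big_seq => e /H [h1 h2].
by rewrite !hyz.
Qed.

Lemma flow_map E (f : nat -> nat) y n v :
  (forall e, e \in E -> (e.1.1 < n)%N /\ (e.1.2 < n)%N) ->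
  (forall a b, (a < n)%N -> (b < n)%N -> f a = f b -> a = b) ->
  (v < n)%N -> flow (map_edges f E) y (f v) = flow E (fun u => y (f u)) v.
Proof.
move=> H inj hv; rewrite /flow /map_edges big_map; apply: eq_big_seq => e /H [h1 h2] /=.
have -> : (f e.1.1 == f v) = (e.1.1 == v).
  by apply/eqP/eqP => [/(inj _ _ h1 hv)|->].
have -> : (f e.1.2 == f v) = (e.1.2 == v).
  by apply/eqP/eqP => [/(inj _ _ h2 hv)|->].
by [].
Qed.

Lemma flow_lin E y z a b c v :
  flow E (fun u => a * y u + b * z u + c) v = a * flow E y v + b * flow E z v.
Proof.
rewrite /flow; elim: E => [|e E IH]; first by rewrite !big_nil; ring.
rewrite !big_cons IH; ring.
Qed.

Lemma lap_cons e E v u : lap (e :: E) v u =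
  (e.1.1 == v)%:R * e.2 * ((u == v)%:R - (u == e.1.2)%:R)
  + (e.1.2 == v)%:R * e.2 * ((u == v)%:R - (u == e.1.1)%:R) + lap E v u.
Proof.
case: e => [[a b] w] /=; rewrite /lap !big_cons /=.
have [->|uv] := eqVneq u v; rewrite ?eqxx /=.
- rewrite (eq_sym v a) (eq_sym v b).
  by case: (a == v); case: (b == v) => /=; ring.
- rewrite (eq_sym u b) (eq_sym u a).
  have h1 : ~~ ((a == v) && (a == u)).
    by apply: contra uv => /andP[/eqP av /eqP au]; rewrite -au -av.
  have h2 : ~~ ((b == v) && (b == u)).
    by apply: contra uv => /andP[/eqP av /eqP au]; rewrite -au -av.
  move: h1 h2; case: (a == v); case: (a == u); case: (b == v); case: (b == u) => //= _ _; ring.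
Qed.

Lemma sum_ind m (c : nat) y : (c < m.+1)%N ->
  \sum_(u < m.+1) ((u : nat) == c)%:R * y u = y c.
Proof.
move=> hc; rewrite (bigD1 (Ordinal hc)) //= eqxx mul1r big1 ?addr0 // => u hu.
have -> : ((u : nat) == c) = false.
  by apply/negbTE; apply: contra hu => /eqP h; apply/eqP; apply: val_inj.
by rewrite mul0r.
Qed.

Lemma lap_flow E y m v : (forall e, e \in E -> (e.1.1 < m.+1)%N /\ (e.1.2 < m.+1)%N) ->
  (v < m.+1)%N -> \sum_(u < m.+1) lap E v u * y u = flow E y v.
Proof.
elim: E => [|e E IH] H hv.
  rewrite /flow big_nil big1 // => u _; rewrite /lap !big_nil; case: ifP => _; 
  by rewrite ?oppr0 mul0r.
have [ha hb] := H e (mem_head _ _).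
have H' : forall e, e \in E -> (e.1.1 < m.+1)%N /\ (e.1.2 < m.+1)%N.
  by move=> e' he'; apply: H; rewrite in_cons he' orbT.
rewrite /flow big_cons -/(flow E y v) -IH //.
under eq_bigr => u _ do rewrite lap_cons mulrDl.
rewrite big_split /=; congr (_ + _).
set al := (e.1.1 == v)%:R * e.2; set be := (e.1.2 == v)%:R * e.2.
rewrite (eq_bigr (fun u : 'I_m.+1 => al * (((u:nat) == v)%:R * y u) - al * (((u:nat) == e.1.2)%:R * y u) + (be * (((u:nat) == v)%:R * y u) - be * (((u:nat) == e.1.1)%:R * y u)))); last by move=> u _; rewrite /al /be; ring.
rewrite big_split /= !sumrB -!mulr_sumr !sum_ind //; ring.
Qed.

Lemma lap_sym E u v : lap E u v = lap E v u.
Proof.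
rewrite /lap eq_sym; case: eqVneq => [->//|_]; congr (- _); apply: eq_bigl => e.
by rewrite orbC.
Qed.


Lemma sum_ind_ord m (i : 'I_m) (F : 'I_m -> R) :
  \sum_(k < m) ((i : nat) == k)%:R * F k = F i.
Proof.
rewrite (bigD1 i) //= eqxx mul1r big1 ?addr0 // => k hk.
have -> : ((i : nat) == k) = false.
  by apply/negbTE; apply: contra hk => /eqP h; apply/eqP; apply: val_inj.
by rewrite mul0r.
Qed.

Definition inrange (G : tgraph R) := forall e, e \in edges G ->
  (e.1.1 < nv G)%N /\ (e.1.2 < nv G)%N.
Definition harm (G : tgraph R) x := forall v, (0 < v)%N -> (v < nv G)%N ->
  v != snk G -> flow (edges G) x v = 0.
Definition uniqs (G : tgraph R) := forall y, y 0%N = 0 -> y (snk G) = 0 ->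
  harm G y -> forall v, (v < nv G)%N -> y v = 0.
Definition pot (G : tgraph R) x r := [/\ x 0%N = 0, harm G x,
  flow (edges G) x (snk G) = 1, flow (edges G) x 0%N = -1 & x (snk G) = r].
Definition good (G : tgraph R) :=
  [/\ src G = 0%N, (0 < snk G)%N, (snk G < nv G)%N, inrange G & uniqs G].

Lemma kernel0 G x r y : good G -> pot G x r -> r != 0 -> y 0%N = 0 ->
  (forall v, (0 < v)%N -> (v < nv G)%N -> flow (edges G) y v = 0) ->
  forall v, (v < nv G)%N -> y v = 0.
Proof.
move=> [s0 t0 tn hin hu] [x0 hx xt xs xr] r0 y0 hy.
set a := y (snk G) / r.
have hz : forall v, (v < nv G)%N -> (fun u => 1 * y u + (- a) * x u + 0) v = 0.
  apply: hu => /=.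
  - by rewrite x0 y0; ring.
  - by rewrite xr /a; field.
  - move=> v v0 vn vt; rewrite flow_lin hy // hx //; ring.
have ey : forall v, (v < nv G)%N -> y v = a * x v.
  move=> v vn; move: (hz v vn) => /= /eqP; rewrite addr0 mul1r mulNr subr_eq0.
  by move/eqP.
have : flow (edges G) y (snk G) = flow (edges G) (fun u => a * x u + 0 * x u + 0) (snk G).
  apply: (@flow_eq _ _ _ (nv G)) => // u hu'; rewrite ey //; ring.
rewrite flow_lin xt hy // => /eqP; rewrite mul0r addr0 mulr1 eq_sym /a mulf_eq0 invr_eq0 (negbTE r0) orbF.
move=> /eqP ht v vn; rewrite ey // /a ht; ring.
Qed.

Lemma H2sq_pot G x r : good G -> pot G x r -> 0 < r -> H2sq G = r / 2%:R.
Proof.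
move=> gG pG rpos.
have [s0 t0 tn hin hu] := gG; have [x0 hx xt xs xr] := pG.
have nvS : (nv G).-1.+1 = nv G by rewrite prednK //; apply: leq_ltn_trans tn.
have hin' : forall e, e \in edges G -> (e.1.1 < (nv G).-1.+1)%N /\ (e.1.2 < (nv G).-1.+1)%N.
  by rewrite nvS.
have key : forall (y : nat -> R) (j : 'I_(nv G).-1), y 0%N = 0 ->
   \sum_(i < (nv G).-1) lap (edges G) j.+1 i.+1 * y i.+1 = flow (edges G) y j.+1.
  move=> y j y0; rewrite -(@lap_flow (edges G) y _ _ hin'); last by rewrite ltnS.
  by rewrite big_ord_recl /= y0 mulr0 add0r.
have hi : forall i : 'I_(nv G).-1, (i.+1 < nv G)%N.
  by move=> i; move: (ltn_ord i); rewrite -ltnS nvS.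
set D := dirLap G.
set X := \col_(j < (nv G).-1) x j.+1.
have DX : D *m X = e_sink G.
  apply/colP => i; rewrite !mxE /D /dirLap s0.
  under eq_bigr => j _ do rewrite !mxE.
  rewrite key //.
  have [ht|ht] := eqVneq (bump 0 i) (snk G).
    by rewrite -[i.+1]/(bump 0 i) ht xt.
  by rewrite hx.
have U : - D \in unitmx.
  rewrite unitmxE unitfE; apply/negP => /det0P [v vn0 vD].
  move: vD; rewrite mulmxN => /eqP; rewrite oppr_eq0 => /eqP vD.
  pose y (u : nat) := \sum_(i < (nv G).-1) (u == i.+1)%:R * v 0 i.
  have y0 : y 0%N = 0 by rewrite /y big1 // => i _; rewrite mul0r.
  have yS : forall i : 'I_(nv G).-1, y i.+1 = v 0 i.
    by move=> i; rewrite /y -(@sum_ind_ord _ i (v 0)); apply: eq_bigr.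
  have hy : forall u, (0 < u)%N -> (u < nv G)%N -> flow (edges G) y u = 0.
    case=> // k _; rewrite -nvS ltnS => hk.
    rewrite -(key y (Ordinal hk) y0).
    move/rowP: vD => /(_ (Ordinal hk)); rewrite !mxE => vk; rewrite -[RHS]vk.
    apply: eq_bigr => i _; rewrite yS mulrC /D /dirLap mxE s0 lap_sym //.
  have := @kernel0 G x r y gG pG _ y0 hy; rewrite (lt0r_neq0 rpos) => /(_ isT) hy0.
  move/negP: vn0; apply; apply/eqP/rowP => i; by rewrite mxE -yS hy0.
have inv : invmx (- D) *m e_sink G = - X.
  by rewrite -DX -[D *m X]opprK -mulNmx mulmxN mulKmx.
rewrite /H2sq -mulmxA inv mulmxN /mxtrace big_ord1 !mxE.
under eq_bigr => i _ do rewrite !mxE s0.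
have := @sum_ind ((nv G).-1) (snk G) x (ltac:(by rewrite nvS)).
rewrite big_ord_recl /= => h.
move: h; rewrite x0 mulr0 add0r xr => <-.
by rewrite mulrN mulNr opprK mulrC.
Qed.

End S.

Section S2.
Variable R : realFieldType.
Implicit Types (E : seq (nat * nat * R)) (y z : nat -> R).

Lemma flow_out_map E (f : nat -> nat) y n v :
  (forall e, e \in E -> (e.1.1 < n)%N /\ (e.1.2 < n)%N) ->
  (forall a, (a < n)%N -> f a != v) -> flow (map_edges f E) y v = 0.
Proof.
move=> H hf; apply: flow_out => e /mapP [e' /H [h1 h2] ->] /=.
by split; apply: hf.
Qed.

Lemma flow_out_ge E y n v :
  (forall e, e \in E -> (e.1.1 < n)%N /\ (e.1.2 < n)%N) ->
  (n <= v)%N -> flow E y v = 0.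
Proof.
move=> H hv; apply: flow_out => e /H [h1 h2].
by split; apply/eqP => h; move: h1 h2; rewrite h; lia.
Qed.

Lemma edge_good (w : R) : 0 < w -> good (edge_graph w).
Proof.
move=> w0; split => //.
- by move=> e; rewrite inE => /eqP -> /=.
- move=> y y0 y1 _ [|[|v]] //=.
Qed.

Lemma edge_pot (w : R) : 0 < w ->
  pot (edge_graph w) (fun u => if u == 1%N then w^-1 else 0) w^-1.
Proof.
move=> w0; have wn : w != 0 by rewrite lt0r_neq0.
split => //=.
- by move=> [|[|v]].
- by rewrite /flow big_cons big_nil /=; field.
- by rewrite /flow big_cons big_nil /=; field.
Qed.


Lemma ser_mapE (G1 G2 : tgraph R) v : src G2 = 0%N ->
  ser_map G1 G2 v = if v == 0%N then snk G1 else (nv G1 + v - 1)%N.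
Proof. by move=> s2; rewrite /ser_map s2; case: v. Qed.

Lemma series_ok (G1 G2 : tgraph R) x1 r1 x2 r2 :
  good G1 -> good G2 -> 0 < r1 -> 0 < r2 -> pot G1 x1 r1 -> pot G2 x2 r2 ->
  good (series G1 G2) /\
  pot (series G1 G2)
    (fun v => if (v < nv G1)%N then x1 v else r1 + x2 (v - nv G1 + 1)%N) (r1 + r2).
Proof.
move=> [s1 t1p t1n in1 u1] [s2 t2p t2n in2 u2] r1p r2p
  [x10 h1 x1t x1s x1r] [x20 h2 x2t x2s x2r].
have r1n : r1 != 0 by rewrite lt0r_neq0.
have r2n : r2 != 0 by rewrite lt0r_neq0.
set f := ser_map G1 G2.
have fE : forall v, f v = if v == 0%N then snk G1 else (nv G1 + v - 1)%N.
  by move=> v; exact: ser_mapE.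
have fI : forall a b, (a < nv G2)%N -> (b < nv G2)%N -> f a = f b -> a = b.
  move=> a b ha hb; rewrite !fE.
  case: eqVneq => [->|a0]; case: eqVneq => [->|b0] //; lia.
have fR : forall a, (a < nv G2)%N -> (f a < nv G1 + nv G2 - 1)%N.
  by move=> a ha; rewrite fE; case: (eqVneq a 0%N) => h0 /=; lia.
have tG : snk (series G1 G2) = (nv G1 + snk G2 - 1)%N.
  by rewrite /= -/f fE; case: (eqVneq (snk G2) 0%N) => h /=; lia.
have inG : inrange (series G1 G2).
  move=> e /=; rewrite mem_cat => /orP [/in1 [h h']|/mapP [e' /in2 [h h'] ->]] /=.
    by move: h h'; case: e => [[p q] w] /= h h'; split; lia.
  by split; apply: fR.
have fnot : forall v, (0 < v)%N -> (v < nv G1)%N -> v != snk G1 ->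
    forall a, (a < nv G2)%N -> f a != v.
  by move=> v v0 vn vt a ha; rewrite fE; case: (eqVneq a 0%N) => h0 /=; lia.
have fnot0 : forall a, (a < nv G2)%N -> f a != 0%N.
  by move=> a ha; rewrite fE; case: (eqVneq a 0%N) => h0 /=; lia.
split.
  split => //=; [by rewrite -/f fE; case: (eqVneq (snk G2) 0%N) => h /=; lia | by rewrite -/f fE; case: (eqVneq (snk G2) 0%N) => h /=; lia |].
  move=> y y0; rewrite tG => yt hy.
  have hy' : forall v, (0 < v)%N -> (v < nv G1 + nv G2 - 1)%N ->
      v != (nv G1 + snk G2 - 1)%N ->
      flow (edges G1) y v + flow (map_edges f (edges G2)) y v = 0.
    by move=> v v0 vn vt; rewrite -flow_cat; move: (hy v v0 vn); rewrite tG; apply.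
  set a := y (snk G1).
  have ey1 : forall v, (v < nv G1)%N -> y v = (a / r1) * x1 v.
    move=> v vn; apply/eqP; rewrite -subr_eq0; apply/eqP.
    suff : 1 * y v + (- (a / r1)) * x1 v + 0 = 0 by rewrite addr0 mul1r mulNr.
    apply: (u1 (fun u => 1 * y u + (- (a / r1)) * x1 u + 0)) => //.
    - by rewrite y0 x10; ring.
    - by rewrite x1r /a; field.
    move=> w w0 wn wt; rewrite flow_lin h1 // mulr0 addr0 mul1r.
    have := hy' w w0 ltac:(lia) ltac:(lia).
    by rewrite (flow_out_map _ in2 (fnot w w0 wn wt)) addr0.
  have ey2 : forall v, (v < nv G2)%N -> y (f v) = a - (a / r2) * x2 v.
    move=> v vn; apply/eqP; rewrite -subr_eq0; apply/eqP.
    suff : 1 * y (f v) + (a / r2) * x2 v + (- a) = 0.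
      by move=> <-; ring.
    apply: (u2 (fun u => 1 * y (f u) + (a / r2) * x2 u + (- a))) => //.
    - by rewrite fE eqxx x20 /a; ring.
    - by rewrite fE (gtn_eqF t2p) yt x2r; field.
    move=> w w0 wn wt; rewrite flow_lin h2 // mulr0 addr0 mul1r.
    rewrite -(flow_map _ in2 fI) //.
    have hfw : (nv G1 <= f w)%N by rewrite fE (gtn_eqF w0); lia.
    have := hy' (f w) ltac:(lia) (fR w wn) ltac:(rewrite fE (gtn_eqF w0); lia).
    by rewrite (flow_out_ge _ in1 hfw) add0r.
  have ha : a = 0.
    have := hy' (snk G1) t1p ltac:(lia) ltac:(lia).
    rewrite (@flow_eq _ (edges G1) y (fun u => (a / r1) * x1 u + 0 * x1 u + 0) (nv G1)) //; last first.
      by move=> u hu; rewrite ey1 //; ring.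
    have -> : snk G1 = f 0%N by rewrite fE.
    rewrite (flow_map _ in2 fI) //.
    rewrite (@flow_eq _ (edges G2) (fun u => y (f u)) (fun u => (- (a / r2)) * x2 u + 0 * x2 u + a) (nv G2)) //; last first.
      by move=> u hu /=; rewrite ey2 //; ring.
      lia.
    rewrite !flow_lin (_ : f 0%N = snk G1); last by rewrite fE.
    rewrite x1t x2s => /eqP.
    have -> : a / r1 * 1 + 0 * 1 + (- (a / r2) * -1 + 0 * -1) = a * (r1^-1 + r2^-1) by ring.
    rewrite mulf_eq0 => /orP [/eqP //|].
    move=> /eqP h; have : 0 < r1^-1 + r2^-1 by rewrite addr_gt0 // invr_gt0.
    by rewrite h ltxx.
    lia.
  move=> v /= vn; have [v1|v1] := ltnP v (nv G1).
    by rewrite ey1 // ha mul0r mul0r.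
  have -> : v = f (v - nv G1 + 1)%N by rewrite fE; case: (eqVneq (v - nv G1 + 1)%N 0%N) => h /=; lia.
  by rewrite ey2 ?ha; [ring | lia].
set x := (fun v : nat => if (v < nv G1)%N then x1 v else r1 + x2 (v - nv G1 + 1)%N).
have xf : forall u, (u < nv G2)%N -> x (f u) = r1 + x2 u.
  move=> u hu; rewrite /x fE; case: (eqVneq u 0%N) => [->|h] /=.
    by rewrite t1n x1r x20 addr0.
  rewrite ifF; last by lia.
  by congr (_ + x2 _); lia.
have x1a : forall u, (u < nv G1)%N -> x u = x1 u by move=> u hu; rewrite /x hu.
have fl1 : forall v, (v < nv G1)%N -> flow (edges G1) x v = flow (edges G1) x1 v.
  by move=> v hv; apply: (flow_eq in1) => // u hu; apply: x1a.
have flM : forall w, (w < nv G2)%N ->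
    flow (map_edges f (edges G2)) x (f w) = flow (edges G2) x2 w.
  move=> w hw; rewrite (flow_map _ in2 fI) //.
  rewrite (@flow_eq _ (edges G2) (fun u => x (f u)) (fun u => 1 * x2 u + 0 * x2 u + r1) (nv G2)) //.
    by rewrite flow_lin; ring.
  by move=> u hu /=; rewrite xf //; ring.
have fl : forall v, flow (edges (series G1 G2)) x v =
    flow (edges G1) x v + flow (map_edges f (edges G2)) x v.
  by move=> v; exact: flow_cat.
have e0 : f 0%N = snk G1 by rewrite fE.
have et : f (snk G2) = (nv G1 + snk G2 - 1)%N.
  by rewrite fE; case: (eqVneq (snk G2) 0%N) => h /=; lia.
split.
- by rewrite x1a ?x10 //; lia.
- move=> v v0 /= vn; rewrite -/f et => vt.
  rewrite (fl v).
  have [v1|v1] := ltnP v (nv G1).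
    rewrite fl1 //.
    have [vt1|vt1] := eqVneq v (snk G1).
      have := flM 0%N ltac:(lia); rewrite e0 => h.
      by rewrite vt1 x1t h x2s; ring.
    by rewrite h1 // (flow_out_map _ in2 (fnot v v0 v1 vt1)); ring.
  rewrite (flow_out_ge _ in1 v1) add0r.
  have -> : v = f (v - nv G1 + 1)%N.
    by rewrite fE; case: (eqVneq (v - nv G1 + 1)%N 0%N) => h /=; lia.
  by rewrite flM; [apply: h2; lia | lia].
- rewrite /= -/f fl (flow_out_ge _ in1); last by rewrite et; lia.
  by rewrite add0r flM.
- rewrite fl fl1; last lia.
  by rewrite x1s (flow_out_map _ in2 fnot0) addr0.
- rewrite /= -/f et /x ifF; last by lia.
  by rewrite (_ : (nv G1 + snk G2 - 1 - nv G1 + 1)%N = snk G2) ?x2r //; lia.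
Qed.


Lemma par_mapE (G1 G2 : tgraph R) v : src G1 = 0%N -> src G2 = 0%N ->
  par_map G1 G2 v = if v == 0%N then 0%N else if v == snk G2 then snk G1
                    else (nv G1 + v - 1 - (snk G2 < v))%N.
Proof. by move=> s1 s2; rewrite /par_map s1 s2; case: v. Qed.

Lemma parallel_ok (G1 G2 : tgraph R) x1 r1 x2 r2 :
  good G1 -> good G2 -> 0 < r1 -> 0 < r2 -> pot G1 x1 r1 -> pot G2 x2 r2 ->
  let r := r1 * r2 / (r1 + r2) in
  let g := fun v => if (v - nv G1 + 1 < snk G2)%N then (v - nv G1 + 1)%N
                    else (v - nv G1 + 2)%N in
  good (parallel G1 G2) /\
  pot (parallel G1 G2)
    (fun v => if (v < nv G1)%N then (r / r1) * x1 v else (r / r2) * x2 (g v)) r.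
Proof.
move=> [s1 t1p t1n in1 u1] [s2 t2p t2n in2 u2] r1p r2p
  [x10 h1 x1t x1s x1r] [x20 h2 x2t x2s x2r] r g.
have r1n : r1 != 0 by rewrite lt0r_neq0.
have r2n : r2 != 0 by rewrite lt0r_neq0.
have r12 : r1 + r2 != 0 by rewrite lt0r_neq0 // addr_gt0.
set f := par_map G1 G2.
have fE : forall v, f v = if v == 0%N then 0%N else if v == snk G2 then snk G1
                    else (nv G1 + v - 1 - (snk G2 < v))%N.
  by move=> v; exact: par_mapE.
have fI : forall a b, (a < nv G2)%N -> (b < nv G2)%N -> f a = f b -> a = b.
  move=> a b ha hb; rewrite !fE.
  by repeat (case: ifP => ?); lia.
have fR : forall a, (a < nv G2)%N -> (f a < nv G1 + nv G2 - 2)%N.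
  by move=> a ha; rewrite fE; repeat (case: ifP => ?); lia.
have fg : forall v, (nv G1 <= v)%N -> (v < nv G1 + nv G2 - 2)%N ->
    [/\ f (g v) = v, (0 < g v)%N, (g v < nv G2)%N & g v != snk G2].
  move=> v v1 v2; rewrite /g; case: ifP => h; rewrite fE;
  by repeat (case: ifP => ?); split; lia.
have fnot : forall v, (0 < v)%N -> (v < nv G1)%N -> v != snk G1 ->
    forall a, (a < nv G2)%N -> f a != v.
  by move=> v v0 vn vt a ha; rewrite fE; repeat (case: ifP => ?); lia.
have fbig : forall a, (a < nv G2)%N -> a != 0%N -> a != snk G2 ->
    (nv G1 <= f a)%N /\ (f a != snk G1).
  by move=> a ha a0 at2; rewrite fE (negbTE a0) (negbTE at2); split; lia.
have f0 : f 0%N = 0%N by rewrite fE.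
have ft : f (snk G2) = snk G1 by rewrite fE eqxx (gtn_eqF t2p).
have inG : inrange (parallel G1 G2).
  move=> e /=; rewrite mem_cat => /orP [/in1 [h h']|/mapP [e' /in2 [h h'] ->]] /=.
    by move: h h'; case: e => [[p q] w] /= h h'; split; lia.
  by split; apply: fR.
have fl : forall y v, flow (edges (parallel G1 G2)) y v =
    flow (edges G1) y v + flow (map_edges f (edges G2)) y v.
  by move=> y v; exact: flow_cat.
split.
  split => //=; [lia|].
  move=> y y0 yt hy.
  have hy' : forall v, (0 < v)%N -> (v < nv G1 + nv G2 - 2)%N -> v != snk G1 ->
      flow (edges G1) y v + flow (map_edges f (edges G2)) y v = 0.
    by move=> v v0 vn vt; rewrite -fl; apply: hy.
  have ey1 : forall v, (v < nv G1)%N -> y v = 0.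
    apply: u1 => // w w0 wn wt.
    have := hy' w w0 ltac:(lia) wt.
    by rewrite (flow_out_map _ in2 (fnot w w0 wn wt)) addr0.
  have ey2 : forall v, (v < nv G2)%N -> y (f v) = 0.
    apply: (u2 (fun u => y (f u))); first by rewrite /= f0.
      by rewrite /= ft.
    move=> w w0 wn wt; rewrite -(flow_map _ in2 fI) //.
    have [fw1 fw2] := fbig w wn ltac:(lia) wt.
    have := hy' (f w) ltac:(lia) (fR w wn) fw2.
    by rewrite (flow_out_ge _ in1 fw1) add0r.
  move=> v vn; have [v1|v1] := ltnP v (nv G1); first exact: ey1.
  have [e _ hg _] := fg v v1 vn; rewrite -e.
  exact: ey2 hg.
set x := (fun v => if (v < nv G1)%N then (r / r1) * x1 v else (r / r2) * x2 (g v)).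
have gf : forall u, (u < nv G2)%N -> u != 0%N -> u != snk G2 -> g (f u) = u.
  move=> u hu u0 ut; rewrite /g fE (negbTE u0) (negbTE ut).
  by case: ifP => ?; lia.
have xf : forall u, (u < nv G2)%N -> x (f u) = (r / r2) * x2 u.
  move=> u hu.
  have [->|u0] := eqVneq u 0%N; first by rewrite f0 /x ifT ?x10 ?x20; [ring | lia].
  have [->|ut] := eqVneq u (snk G2).
    by rewrite ft /x ifT // x1r x2r /r; field; rewrite r1n r2n r12.
  have [fu1 _] := fbig u hu u0 ut.
  by rewrite /x ifF ?gf //; lia.
have x1a : forall u, (u < nv G1)%N -> x u = (r / r1) * x1 u by move=> u hu; rewrite /x hu.
have fl1 : forall v, (v < nv G1)%N -> flow (edges G1) x v = (r / r1) * flow (edges G1) x1 v.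
  move=> v hv.
  rewrite (@flow_eq _ (edges G1) x (fun u => (r / r1) * x1 u + 0 * x1 u + 0) (nv G1)) //.
    by rewrite flow_lin; ring.
  by move=> u hu /=; rewrite x1a //; ring.
have flM : forall w, (w < nv G2)%N ->
    flow (map_edges f (edges G2)) x (f w) = (r / r2) * flow (edges G2) x2 w.
  move=> w hw; rewrite (flow_map _ in2 fI) //.
  rewrite (@flow_eq _ (edges G2) (fun u => x (f u)) (fun u => (r / r2) * x2 u + 0 * x2 u + 0) (nv G2)) //.
    by rewrite flow_lin; ring.
  by move=> u hu /=; rewrite xf //; ring.
split.
- by rewrite x1a ?x10 ?mulr0 //; lia.
- move=> v v0 /= vn vt; rewrite flow_cat -/f.
  have [v1|v1] := ltnP v (nv G1).
    rewrite fl1 // h1 // (flow_out_map _ in2 (fnot v v0 v1 vt)); ring.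
  rewrite (flow_out_ge _ in1 v1) add0r.
  have [e g0 gn gt] := fg v v1 vn.
  by rewrite -e flM // h2 // mulr0.
- rewrite /= -/f (@flow_cat R (edges G1)) fl1 // -{2}ft flM // x1t x2t /r; field; rewrite ?r1n ?r2n ?r12 //.
- rewrite (fl x 0%N) fl1; last lia.
  rewrite -{2}f0 flM; last lia.
  rewrite x1s x2s /r; field; rewrite ?r1n ?r2n ?r12 //.
- by rewrite /= x1a // x1r /r; field; rewrite ?r1n ?r2n ?r12 //.
Qed.

End S2.

Lemma ttsp_ok (R : realFieldType) (G : tgraph R) :
  ttsp G -> good G /\ exists x r, 0 < r /\ pot G x r.
Proof.
elim=> {G}.
- move=> w w0; split; first exact: edge_good.
  by exists (fun u => if u == 1%N then w^-1 else 0), w^-1; rewrite invr_gt0 w0; split => //; apply: edge_pot.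
- move=> G1 G2 _ [g1 [x1 [r1 [r1p p1]]]] _ [g2 [x2 [r2 [r2p p2]]]].
  have [gs ps] := series_ok g1 g2 r1p r2p p1 p2.
  by split => //; eexists; exists (r1 + r2); split; [exact: addr_gt0 | exact: ps].
- move=> G1 G2 _ [g1 [x1 [r1 [r1p p1]]]] _ [g2 [x2 [r2 [r2p p2]]]].
  have [gs ps] := parallel_ok g1 g2 r1p r2p p1 p2.
  split => //; eexists; eexists; split; last exact: ps.
  by rewrite divr_gt0 // ?mulr_gt0 // addr_gt0.
Qed.

Theorem theorem3 (R : realFieldType) (G1 G2 : tgraph R) :
  ttsp G1 -> ttsp G2 ->
  H2sq (series G1 G2) = H2sq G1 + H2sq G2 /\
  H2sq (parallel G1 G2) = psum (H2sq G1) (H2sq G2).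
Proof.
move=> h1 h2.
have [g1 [x1 [r1 [r1p p1]]]] := ttsp_ok h1.
have [g2 [x2 [r2 [r2p p2]]]] := ttsp_ok h2.
have r12 : r1 + r2 != 0 by rewrite lt0r_neq0 // addr_gt0.
have r1n : r1 != 0 by rewrite lt0r_neq0.
have r2n : r2 != 0 by rewrite lt0r_neq0.
have two : (2%:R : R) != 0 by rewrite pnatr_eq0.
rewrite (H2sq_pot g1 p1 r1p) (H2sq_pot g2 p2 r2p).
have [gs ps] := series_ok g1 g2 r1p r2p p1 p2.
have [gp pp] := parallel_ok g1 g2 r1p r2p p1 p2.
rewrite (H2sq_pot gs ps (addr_gt0 r1p r2p)).
rewrite (H2sq_pot gp pp); last by rewrite divr_gt0 // ?mulr_gt0 // addr_gt0.
split; first by field.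
rewrite /psum; field.
by rewrite ?two ?r12 ?r1n ?r2n.
Qed.
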